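(* For any finite alphabet $A$ and any $u\in A^*$: $h({\uparrow}u)=|u|$, and $h(I(\{u\}))=h({\uparrow}u\cup{\downarrow}u)$, which equals $|u|$ if $|A|\geq2$ and $0$ otherwise.
   Context: $u\sqsubseteq v$ (subword) means $u=a_1\cdots a_n$ with letters $a_i$ and $v=v_0a_1v_1\cdots a_nv_n$ for some words $v_i$. ${\uparrow}u=\{v\in A^*~|~u\sqsubseteq v\}$, ${\downarrow}u=\{v\in A^*~|~v\sqsubseteq u\}$. $u\perp v$ means $u\not\sqsubseteq v$ and $v\not\sqsubseteq u$, and $I(L)=\{w\in A^*~|~\exists v\in L: w\perp v\}$. $u\sim_n v$ iff $u,v$ have the same subwords of length at most $n$; $L$ is $n$-PT if it is a union of $\sim_n$-classes, and $h(L)$ is the least such $n$. *)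

(* Defs.v *)
From mathcomp Require Import all_boot.
Set Implicit Arguments. Unset Strict Implicit. Unset Printing Implicit Defensive.

Section Defs.
Variable A : finType.

Definition lang := seq A -> Prop.

Definition subword (u v : seq A) : bool := subseq u v.

Definition up (u : seq A) : lang := fun v => subword u v.
Definition down (u : seq A) : lang := fun v => subword v u.
Definition lunion (L M : lang) : lang := fun w => L w \/ M w.
Definition singleton (u : seq A) : lang := fun v => v = u.

Definition incomp (u v : seq A) : Prop := ~~ subword u v /\ ~~ subword v u.

Definition Inc (L : lang) : lang := fun w => exists v, L v /\ incomp w v.

Definition simn (n : nat) (u v : seq A) : Prop :=
  forall w : seq A, size w <= n -> subword w u = subword w v.

Definition nPT (n : nat) (L : lang) : Prop :=
  forall u v, simn n u v -> (L u <-> L v).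

Definition is_h (L : lang) (n : nat) : Prop :=
  nPT n L /\ forall m, nPT m L -> n <= m.
End Defs.

(* Main.v *)
Require Import Defs.
From mathcomp Require Import all_boot zify.
Set Implicit Arguments. Unset Strict Implicit. Unset Printing Implicit Defensive.

Section Aux.
Variable A : finType.

Definition cA (a : A) : seq A := [seq x <- enum A | x != a].

Fixpoint F (u : seq A) : seq A :=
  match u with
  | [::] => [::]
  | a :: u' => cA a ++ (if u' is [::] then [::] else a :: F u')
  end.

Lemma sub_skip (a : A) s u' t : a \notin s -> subseq (a :: u') (s ++ a :: t) -> subseq u' t.
Proof.
elim: s => [|x s IH] /=; first by rewrite eqxx.
rewrite inE negb_or => /andP [hx hs]; rewrite (negbTE hx); exact: IH.
Qed.

Lemma F_avoid u : u != [::] -> ~~ subseq u (F u).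
Proof.
elim: u => [|a u' IH] // _.
case: u' IH => [|b u''] IH /=.
  by rewrite cats0 sub1seq mem_filter eqxx.
apply/negP => /sub_skip H; move: IH => /(_ isT) /negP; apply; apply: H.
by rewrite mem_filter eqxx.
Qed.

Lemma F_all u v : u != [::] -> size v <= (size u).-1 -> subseq v (F u).
Proof.
elim: u v => [|a u' IH] v // _.
case: u' IH => [|b u''] IH /=.
  by rewrite leqn0 => /nilP ->; rewrite sub0seq.
case: v => [|x v'] /=; first by rewrite sub0seq.
rewrite ltnS => hv.
have -> : x :: v' = [:: x] ++ v' by [].
have -> : cA a ++ a :: F (b :: u'') = (cA a ++ [:: a]) ++ F (b :: u'') by rewrite -catA.
apply: cat_subseq.
  rewrite sub1seq mem_cat mem_filter mem_enum inE.
  apply/orP; case: (eqVneq x a) => [->|h]; [by right|left; apply/andP; split =>//].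
exact: IH.
Qed.

Lemma size_cA a : 2 <= #|A| -> 1 <= size (cA a).
Proof.
move=> h; rewrite size_filter.
have := count_predC (pred1 a) (enum A).
rewrite -cardT (count_uniq_mem _ (enum_uniq A)) mem_enum.
have -> : count (predC (pred1 a)) (enum A) = count (fun x => x != a) (enum A) by [].
move=> e; move: h; rewrite -e; case: (count _ _) => //.
Qed.

Lemma F_size u : 2 <= #|A| -> size u <= size (F u).
Proof.
move=> h; elim: u => [|a u' IH] //=.
case: u' IH => [|b u''] IH /=; first by rewrite cats0 size_cA.
rewrite size_cat /=; have := size_cA a h; move: IH; simpl; lia.
Qed.


Implicit Types u v w s t : seq A.

Lemma subseq_eq_size (s t : seq A) : subseq s t -> size t <= size s -> s = t.
Proof.
move=> h hs; have := size_subseq_leqif h; case => _ e.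
by apply/eqP; rewrite -e eqn_leq hs size_subseq.
Qed.

Lemma simn_sym n (v w : seq A) : simn n v w -> simn n w v.
Proof. by move=> h x hx; rewrite h. Qed.

Lemma up_nPT u : nPT (size u) (up u).
Proof. by move=> v w h; rewrite /up h. Qed.

Lemma up_min u m : nPT m (up u) -> size u <= m.
Proof.
move=> h; rewrite leqNgt; apply/negP => hm.
have hu : u != [::] by apply/eqP => e; rewrite e in hm.
have hs : simn m (F u ++ u) (F u).
  move=> w hw.
  have hw' : subword w (F u) by apply: F_all => //; move: hw hm; case: (size u) => //= k; lia.
  by rewrite hw' /subword (subseq_trans hw' (prefix_subseq _ _)).
have := proj1 (h _ _ hs); rewrite /up /subword suffix_subseq => /(_ isT).
by apply/negP; apply: F_avoid.
Qed.

Definition bU (u w : seq A) := subword u w || subword w u.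

Lemma bU_nPT u : nPT (size u) (fun w : seq A => bU u w).
Proof.
suff H : forall v w, simn (size u) v w -> bU u v -> bU u w.
  by move=> v w h; split; apply: H => //; apply: simn_sym.
move=> v w h /orP [hv|hv]; apply/orP.
  by left; rewrite -(h u (leqnn _)).
have hvw : subword v w by rewrite -(h v (size_subseq hv)); exact: subseq_refl.
case: (ltngtP (size v) (size u)) => e.
- right; suff -> : w = v by [].
  case: (leqP (size w) (size v)) => hw.
    by apply/esym/subseq_eq_size.
  have ht : subword (take (size v).+1 w) w by exact: take_subseq.
  rewrite -h in ht; last by rewrite size_take; case: ifP; lia.
  exfalso; move/size_subseq: ht; rewrite size_take; case: ifP => _ hh; [by rewrite ltnn in hh|by rewrite leqNgt hw in hh].
- by move: (size_subseq hv); rewrite leqNgt e.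
- left; have := subseq_eq_size hv; rewrite e leqnn => /(_ isT) <-; exact: hvw.
Qed.

Lemma bU_min u m : 2 <= #|A| -> nPT m (fun w : seq A => bU u w) -> size u <= m.
Proof.
move=> hA h; rewrite leqNgt; apply/negP => hm.
have hu : u != [::] by apply/eqP => e; rewrite e in hm.
have hs : simn m (F u ++ u) (F u).
  move=> w hw.
  have hw' : subword w (F u) by apply: F_all => //; move: hw hm; case: (size u) => //= k; lia.
  by rewrite hw' /subword (subseq_trans hw' (prefix_subseq _ _)).
have := proj1 (h _ _ hs); rewrite /bU /subword suffix_subseq => /(_ isT) /orP [].
  by apply/negP; apply: F_avoid.
move=> hF; have := subseq_eq_size hF (F_size u hA) => e.
by move: (F_avoid hu); rewrite e subseq_refl.
Qed.

Lemma small_all u : #|A| < 2 -> forall w, bU u w.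
Proof.
move=> hA; have hE : forall x y : A, x = y.
  have h1 : #|A| <= 1 by lia.
  by move=> x y; move/fintype_le1P: h1 => H; rewrite (H x) (H y).
suff H : forall s t : seq A, size s <= size t -> subseq s t.
  move=> w; rewrite /bU /subword; case: (leqP (size u) (size w)) => h.
    by rewrite (H u w h).
  by rewrite (H w u (ltnW h)) orbT.
elim=> [|x s IH] [|y t] //= h.
by rewrite (hE x y) eqxx; apply: IH.
Qed.

End Aux.

Lemma is_h_ext (A : finType) (L : lang A) (P : pred (seq A)) n :
  (forall w, L w <-> P w) -> is_h (fun w : seq A => P w) n -> is_h L n.
Proof.
move=> HL [h1 h2]; split.
  by move=> u v huv; rewrite !HL; apply: h1.
move=> m hm; apply: h2 => u v huv; rewrite -!HL; exact: hm.
Qed.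

Lemma negb_iff (a b : bool) : (a <-> b) <-> (~~ a <-> ~~ b).
Proof. by case: a; case: b; intuition. Qed.

Lemma is_h_neg (A : finType) (L : lang A) (P : pred (seq A)) n :
  (forall w, L w <-> ~~ P w) -> is_h (fun w : seq A => P w) n -> is_h L n.
Proof.
move=> HL [h1 h2]; split.
  by move=> u v huv; rewrite !HL -negb_iff; apply: h1.
move=> m hm; apply: h2 => u v huv; rewrite negb_iff -!HL; exact: hm.
Qed.

Theorem proposition8 (A : finType) (u : seq A) :
  is_h (up u) (size u) /\
  is_h (Inc (singleton u)) (if 2 <= #|A| then size u else 0) /\
  is_h (lunion (up u) (down u)) (if 2 <= #|A| then size u else 0).
Proof.
have HB : is_h (fun w : seq A => bU u w) (if 2 <= #|A| then size u else 0).
  case: ifP => hA.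
    by split; [exact: bU_nPT | move=> m; exact: bU_min].
  split => // v w _; split => _; apply: small_all; by rewrite ltnNge hA.
split; first by split; [exact: up_nPT | move=> m; exact: up_min].
split.
  apply: (is_h_neg _ HB) => w; rewrite /Inc /singleton /incomp /bU negb_or.
  split; first by case=> v [-> [h1 h2]]; rewrite h1 h2.
  by move/andP=> [h1 h2]; exists u; split.
apply: (is_h_ext _ HB) => w; rewrite /lunion /up /down /bU.
by split; [case=> ->; rewrite ?orbT | case/orP; [left|right]].
Qed.
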